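(* Let $a\in\mathbb{R}$ and let the polynomials $H_m(z)$ be defined by the generating function \[ \sum_{m=0}^{\infty}H_m(z)t^m=\frac{1}{1+t+at^2+zt^3}. \] If $-1\le a\le 1/3$, then for every $m$ the zeros of $H_m(z)$ lie in the real interval \[ I_a=\left(-\infty,\ \frac{-2+9a-2\sqrt{(1-3a)^3}}{27}\right], \] and $\bigcup_{m=0}^{\infty}\mathcal{Z}(H_m)$ is dense in $I_a$.
   Context: $\mathcal{Z}(H_m)$ denotes the set of zeros of $H_m(z)$. Convention: the zeros of the constant zero polynomial are considered real (and the statement about their location is vacuous). *)

(* Defs.v *)
From HB Require Import structures.
From mathcomp Require Import all_boot all_order all_algebra.
From mathcomp Require Import reals.
From mathcomp Require Import complex.
Set Implicit Arguments. Unset Strict Implicit. Unset Printing Implicit Defensive.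
Import Order.TTheory GRing.Theory Num.Theory.
Local Open Scope ring_scope.

(* Hs a m = (H_m, H_{m-1}, H_{m-2}) with H_{-1} = H_{-2} = 0.  The identity
   (1 + t + a t^2 + z t^3) * \sum_m H_m t^m = 1 is equivalent to
   H_0 = 1 and H_m + H_{m-1} + a H_{m-2} + z H_{m-3} = 0 for m >= 1. *)
Fixpoint Hs (R : nzRingType) (a : R) (m : nat) : {poly R} * {poly R} * {poly R} :=
  match m with
  | 0 => (1, 0, 0)
  | m'.+1 =>
      let: (h0, h1, h2) := Hs a m' in
      (- h0 - a%:P * h1 - 'X * h2, h0, h1)
  end.

Definition H (R : nzRingType) (a : R) (m : nat) : {poly R} := (Hs a m).1.1.

Definition Ia_end (R : rcfType) (a : R) : R :=
  (-2 + 9 * a - 2 * Num.sqrt ((1 - 3 * a) ^+ 3)) / 27.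

(* Main.v *)
Require Import Defs.
From HB Require Import structures.
From mathcomp Require Import all_boot all_order all_algebra.
From mathcomp Require Import reals.
From mathcomp Require Import complex.
From mathcomp Require Import polyrcf.
From mathcomp Require Import trigo.
From mathcomp Require Import zify ring lra.
Import Order.TTheory GRing.Theory Num.Theory.
Local Open Scope ring_scope.
Set Implicit Arguments. Unset Strict Implicit. Unset Printing Implicit Defensive.

Lemma HsE (R : nzRingType) (a : R) m :
  Hs a m.+2 = (H a m.+2, H a m.+1, H a m).
Proof.
elim: m => [|m IH]; first by [].
have -> : Hs a m.+3 = let: (h0, h1, h2) := Hs a m.+2 in
      (- h0 - a%:P * h1 - 'X * h2, h0, h1) by [].
rewrite IH /=.
by rewrite /H; have -> : Hs a m.+3 = let: (h0, h1, h2) := Hs a m.+2 in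
      (- h0 - a%:P * h1 - 'X * h2, h0, h1) by []; rewrite IH.
Qed.

Lemma H0 (R : nzRingType) (a : R) : H a 0 = 1. Proof. by []. Qed.
Lemma H1 (R : nzRingType) (a : R) : H a 1 = -1. Proof. by rewrite /H /= !mulr0 !subr0. Qed.
Lemma H2 (R : nzRingType) (a : R) : H a 2 = 1 - a%:P.
Proof. by rewrite /H /= !mulr0 !subr0 mulr1 opprK. Qed.
Lemma Hrec (R : nzRingType) (a : R) m :
  H a m.+3 = - H a m.+2 - a%:P * H a m.+1 - 'X * H a m.
Proof.
have -> : H a m.+3 = (let: (h0, h1, h2) := Hs a m.+2 in
      (- h0 - a%:P * h1 - 'X * h2, h0, h1)).1.1 by [].
by rewrite HsE.
Qed.

Lemma size_rec_le (R : nzRingType) (a : R) (p q r : {poly R}) n :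
  (size p <= n.+1)%N -> (size q <= n.+1)%N -> (size r <= n)%N ->
  (size (- p - a%:P * q - 'X * r)%R <= n.+1)%N.
Proof.
move=> /leq_sizeP hp /leq_sizeP hq /leq_sizeP hr; apply/leq_sizeP => j hj.
rewrite !coefE hp // hq // mulr0 subr0 oppr0 sub0r.
case: j hj => [//|j] hj /=; rewrite hr ?oppr0 //.
Qed.

Lemma coef_rec (R : nzRingType) (a : R) (p q r : {poly R}) n :
  (size p <= n.+1)%N -> (size q <= n.+1)%N ->
  (- p - a%:P * q - 'X * r)`_n.+1 = - r`_n.
Proof.
move=> /leq_sizeP hp /leq_sizeP hq.
by rewrite !coefE hp // hq // mulr0 subr0 oppr0 sub0r.
Qed.

Lemma Hdeg (R : numFieldType) (a : R) k :
  ((size (H a (3 * k)) <= k.+1)%N /\ (H a (3 * k))`_k = (-1) ^+ k) /\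
  ((size (H a (3 * k).+1) <= k.+1)%N /\
      (H a (3 * k).+1)`_k = (-1) ^+ k.+1 * k.+1%:R) /\
  ((size (H a (3 * k).+2) <= k.+1)%N /\
      (H a (3 * k).+2)`_k = (-1) ^+ k * (k.+1%:R * (k.+2%:R / 2 - a))).
Proof.
elim: k => [|k [[s0 c0] [[s1 c1] [s2 c2]]]].
  rewrite muln0 H0 H1 H2 size_polyC size_polyN size_polyC !coefE /=.
  split; [|split]; (split; [|]).
  - by rewrite leq_b1.
  - by [].
  - by rewrite leq_b1.
  - by rewrite expr1 mulN1r.
  - by apply: leq_trans (size_polyD _ _) _; rewrite size_polyN !size_polyC geq_max !leq_b1.
  - rewrite expr0 !mul1r.
    by rewrite divff // pnatr_eq0.
have e0 : (3 * k.+1 = (3 * k).+3)%N by rewrite mulnS addnC addn3.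
rewrite e0.
have [sD cD] : (size (H a (3 * k).+3) <= k.+2)%N /\ (H a (3 * k).+3)`_k.+1 = (-1) ^+ k.+1.
  rewrite Hrec; split; first by apply: size_rec_le => //; apply: leq_trans (leqnSn _).
  by rewrite coef_rec // c0 exprS mulN1r.
have [sE cE] : (size (H a (3 * k).+4) <= k.+2)%N /\
     (H a (3 * k).+4)`_k.+1 = (-1) ^+ k.+2 * k.+2%:R.
  rewrite Hrec; split; first by apply: size_rec_le => //; apply: leq_trans (leqnSn _).
  rewrite !coefE /= cD.
  move/leq_sizeP: s2 => ->//; rewrite mulr0 subr0 c1 !exprS -[(k.+2)%:R]natr1.
  ring.
split; first by [].
split; first by [].
rewrite Hrec; split; first by apply: size_rec_le => //; apply: leq_trans (leqnSn _).
rewrite !coefE /= cE cD c2 !exprS.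
rewrite -[(k.+3)%:R]natr1 -[(k.+2)%:R]natr1 -[(k.+1)%:R]natr1.
by field.
Qed.

Fixpoint Pp (R : nzRingType) (u r : R) n : R * R :=
  match n with
  | 0 => (1, 2 * u)
  | n'.+1 => let: (x, y) := Pp u r n' in (y, 2 * u * y - r * x)
  end.
Arguments Pp {R}.
Definition P (R : nzRingType) (u r : R) n := (Pp u r n).1.
Arguments P {R}.

Lemma PpE (R : nzRingType) (u r : R) n : Pp u r n = (P u r n, P u r n.+1).
Proof.
elim: n => [|n IH] //=.
by rewrite /P /= IH /=.
Qed.
Lemma P0 (R : nzRingType) (u r : R) : P u r 0 = 1. Proof. by []. Qed.
Lemma P1 (R : nzRingType) (u r : R) : P u r 1 = 2 * u. Proof. by []. Qed.
Lemma Prec (R : nzRingType) (u r : R) n :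
  P u r n.+2 = 2 * u * P u r n.+1 - r * P u r n.
Proof. by rewrite {1}/P /= PpE. Qed.

Lemma hornerHrec (R : comNzRingType) (a : R) m z :
  (H a m.+3).[z] = - (H a m.+2).[z] - a * (H a m.+1).[z] - z * (H a m).[z].
Proof. by rewrite Hrec !(hornerN, hornerD, hornerCM, hornerM, hornerX). Qed.

Lemma key_identity (R : comNzRingType) (a u : R) m :
  let s := -1 - 2 * u in let r := 4 * u ^+ 2 + 2 * u + a in
  (H a m).[(1 + 2 * u) * r] * (s ^+ 2 - 2 * u * s + r) =
  s ^+ m.+2 - s * P u r m.+1 + r * P u r m.
Proof.
move=> s r.
suff : forall m, [/\ (H a m).[(1 + 2 * u) * r] * (s ^+ 2 - 2 * u * s + r) =
  s ^+ m.+2 - s * P u r m.+1 + r * P u r m,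
  (H a m.+1).[(1 + 2 * u) * r] * (s ^+ 2 - 2 * u * s + r) =
  s ^+ m.+3 - s * P u r m.+2 + r * P u r m.+1 &
  (H a m.+2).[(1 + 2 * u) * r] * (s ^+ 2 - 2 * u * s + r) =
  s ^+ m.+4 - s * P u r m.+3 + r * P u r m.+2] by move/(_ m) => [].
elim => [|n [e0 e1 e2]].
  rewrite H0 H1 H2 -polyC1 !(hornerN, hornerD, hornerC) !Prec P1 P0 /s /r; split; ring.
split => //.
rewrite hornerHrec.
set A := (H a n).[_]; set B := (H a n.+1).[_]; set C := (H a n.+2).[_].
set D := (s ^+ 2 - 2 * u * s + r).
transitivity (- (C * D) - a * (B * D) - (1 + 2 * u) * r * (A * D)); first by ring.
rewrite e0 e1 e2 !Prec !exprS /s /r; ring.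
Qed.

Lemma sin_pin (R : realType) j : sin (pi *+ j) = 0 :> R.
Proof.
elim: j => [|j IH]; first by rewrite mulr0n sin0.
by rewrite mulrSr sinDpi IH oppr0.
Qed.
Lemma cos_pin (R : realType) j : cos (pi *+ j) = (-1) ^+ j :> R.
Proof.
elim: j => [|j IH]; first by rewrite mulr0n cos0.
by rewrite mulrSr cosDpi IH exprS mulN1r.
Qed.

Lemma cos_pi3 (R : realType) : cos (pi / 3) = 1 / 2 :> R.
Proof.
set x := pi / 3 : R.
have h3 : x + x + x = pi by rewrite /x; field.
have hh := cos2Dsin2 x.
have c3 : cos (x + x + x) = 4 * cos x ^+ 3 - 3 * cos x.
  apply/eqP; rewrite -subr_eq0 !cosD !sinD.
  have -> : (cos x * cos x - sin x * sin x) * cos x -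
    (sin x * cos x + cos x * sin x) * sin x - (4 * cos x ^+ 3 - 3 * cos x) =
    - 3 * cos x * (cos x ^+ 2 + sin x ^+ 2 - 1) by ring.
  by rewrite hh subrr mulr0.
rewrite h3 cospi in c3.
have cpos : 0 < cos x.
  apply: cos_gt0_pihalf; rewrite /x; have := pi_gt0 R; move=> hp.
  apply/andP; split; lra.
have : (cos x + 1) * (2 * cos x - 1) ^+ 2 = 0.
  apply/eqP; rewrite -subr_eq0; apply/eqP.
  transitivity (4 * cos x ^+ 3 - 3 * cos x + 1); first by ring.
  by rewrite -c3; ring.
move/eqP; rewrite mulf_eq0 sqrf_eq0 => /orP[]; first by move=> /eqP; lra.
by move=> /eqP; lra.
Qed.

Lemma cos_2pi3 (R : realType) : cos (pi *+ 2 / 3) = - (1 / 2) :> R.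
Proof.
have -> : pi *+ 2 / 3 = pi / 3 + pi / 3 :> R by rewrite mulr2n; field.
rewrite cosD.
have hh := cos2Dsin2 (pi / 3 : R).
rewrite cos_pi3 in hh *.
move: hh; rewrite !expr2; nra.
Qed.


Lemma sin_step (R : realType) (t : R) k :
  sin (t *+ k.+3) = 2 * cos t * sin (t *+ k.+2) - sin (t *+ k.+1).
Proof.
have -> : t *+ k.+3 = t *+ k.+2 + t by rewrite mulrSr.
have -> : t *+ k.+1 = t *+ k.+2 - t by rewrite [t *+ k.+2]mulrSr addrK.
rewrite sinD sinB; ring.
Qed.

Lemma P_trig (R : realType) (rho t : R) k :
  P (rho * cos t) (rho ^+ 2) k * sin t = rho ^+ k * sin (t *+ k.+1).
Proof.
suff : forall k, P (rho * cos t) (rho ^+ 2) k * sin t = rho ^+ k * sin (t *+ k.+1) /\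
  P (rho * cos t) (rho ^+ 2) k.+1 * sin t = rho ^+ k.+1 * sin (t *+ k.+2).
  by move/(_ k) => [].
elim => [|n [e0 e1]].
  rewrite P0 P1 sin_mulr2n mulr1n expr0 expr1 !mul1r; split => //; ring.
split => //.
rewrite Prec sin_step.
transitivity (2 * (rho * cos t) * (P (rho * cos t) (rho ^+ 2) n.+1 * sin t) -
  rho ^+ 2 * (P (rho * cos t) (rho ^+ 2) n * sin t)); first by ring.
rewrite e0 e1 !exprS; ring.
Qed.

Definition sq (R : realType) (a : R) := Num.sqrt (1 - 3 * a).
Arguments sq {R}.
Definition u0 (R : realType) (a : R) := - (1 + sq a) / 3.
Arguments u0 {R}.
Definition r2 (R : realType) (a u : R) := 4 * u ^+ 2 + 2 * u + a.
Arguments r2 {R}.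
Definition zf (R : realType) (a u : R) := (1 + 2 * u) * r2 a u.
Arguments zf {R}.

Lemma sq_facts (R : realType) (a : R) : -1 <= a -> a <= 1 / 3 ->
  [/\ 0 <= sq a, sq a <= 2 & a = (1 - sq a ^+ 2) / 3].
Proof.
move=> h1 h2; have h0 : 0 <= 1 - 3 * a by lra.
have e := sqr_sqrtr h0.
split; first exact: sqrtr_ge0.
- rewrite /sq; have : sq a ^+ 2 <= 4 by rewrite /sq e; lra.
  have := sqrtr_ge0 (1 - 3 * a); rewrite /sq; nra.
- by rewrite /sq e; field.
Qed.


Lemma v2_pos (R : realType) (a u : R) : -1 <= a -> a <= 1 / 3 ->
  u < u0 a -> 0 < 3 * u ^+ 2 + 2 * u + a.
Proof.
move=> h1 h2; case: (sq_facts h1 h2) => s0 s2 ea; rewrite /u0 => hu.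
rewrite ea.
have -> : 3 * u ^+ 2 + 2 * u + (1 - sq a ^+ 2) / 3 =
  3 * (u + (1 + sq a) / 3) * (u + (1 - sq a) / 3) by field.
have h3 : u + (1 + sq a) / 3 < 0 by lra.
have h4 : u + (1 - sq a) / 3 < 0 by lra.
nra.
Qed.

Lemma r2_pos (R : realType) (a u : R) : -1 <= a -> a <= 1 / 3 ->
  u < u0 a -> 0 < r2 a u.
Proof.
move=> h1 h2 hu; have := v2_pos h1 h2 hu; rewrite /r2; nra.
Qed.

Lemma s2_lt (R : realType) (a u : R) : -1 <= a -> a <= 1 / 3 ->
  u < u0 a -> (-1 - 2 * u) ^+ 2 < r2 a u.
Proof.
move=> h1 h2; case: (sq_facts h1 h2) => s0 s2 ea; rewrite /u0 /r2 => hu.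
have : 2 * u < a - 1.
  rewrite ea; have : sq a * (sq a - 2) <= 0 by nra.
  move: hu; set t := sq a; move=> hu ht.
  have : - (1 + t) / 3 <= ((1 - t ^+ 2) / 3 - 1) / 2 by rewrite expr2; lra.
  lra.
move=> h; nra.
Qed.

Lemma D_pos (R : realType) (a u : R) : -1 <= a -> a <= 1 / 3 ->
  u < u0 a -> 0 < (-1 - 2 * u) ^+ 2 - 2 * u * (-1 - 2 * u) + r2 a u.
Proof.
move=> h1 h2 hu; have := v2_pos h1 h2 hu; rewrite /r2; nra.
Qed.

Lemma u0_neg (R : realType) (a : R) : -1 <= a -> a <= 1 / 3 -> u0 a <= - (1 / 3).
Proof.
move=> h1 h2; case: (sq_facts h1 h2) => s0 s2 ea; rewrite /u0; lra.
Qed.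

Lemma zf_mono (R : realType) (a u1 u2 : R) : -1 <= a -> a <= 1 / 3 ->
  u1 < u2 -> u2 <= u0 a -> zf a u1 < zf a u2.
Proof.
move=> h1 h2 h12 h2u; case: (sq_facts h1 h2) => s0 s2 ea.
rewrite /zf /r2 -subr_gt0.
move: h2u; rewrite /u0; move: (sq a) s0 s2 ea => t s0 s2 ea h2u; subst a.
have [w1 hw1 eu1] : exists2 w1, 0 < w1 & u1 = -(1 + t) / 3 - w1.
  by exists (-(1 + t) / 3 - u1); [lra | ring].
have [w2 hw2 eu2] : exists2 w2, 0 <= w2 & u2 = -(1 + t) / 3 - w2.
  by exists (-(1 + t) / 3 - u2); [lra | ring].
subst u1 u2.
set A := (X in 0 < X).
have -> : A = (w1 - w2) * (2 * t ^+ 2 + (w1 + w2) * (8 * t) + 8 * (w1 ^+ 2 + w1 * w2 + w2 ^+ 2)).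
  by rewrite /A; field.
have hW : 0 < w1 ^+ 2 + w1 * w2 + w2 ^+ 2 by nra.
have hQ : 0 < 2 * t ^+ 2 + (w1 + w2) * (8 * t) + 8 * (w1 ^+ 2 + w1 * w2 + w2 ^+ 2).
  have : 0 <= (w1 + w2) * (8 * t) by apply: mulr_ge0; lra.
  have : 0 <= t ^+ 2 by apply: sqr_ge0.
  lra.
have hw : 0 < w1 - w2 by lra.
exact: mulr_gt0.
Qed.

Lemma u0a (R : realType) (a : R) : -1 <= a -> a <= 1 / 3 -> u0 a + a <= 0.
Proof.
move=> h1 h2; case: (sq_facts h1 h2) => s0 s2 ea.
rewrite /u0; move: (sq a) s0 s2 ea => t s0 s2 ea; rewrite ea.
have : 0 <= t * t by nra.
rewrite expr2; lra.
Qed.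

Lemma g_mono (R : realType) (a u1 u2 : R) : -1 <= a -> a <= 1 / 3 ->
  u1 < u2 -> u2 <= u0 a -> u1 ^+ 2 * r2 a u2 < u2 ^+ 2 * r2 a u1.
Proof.
move=> h1 h2 h12 h2u.
have hu := u0_neg h1 h2; have ha := u0a h1 h2.
rewrite -subr_gt0 /r2.
have -> : u2 ^+ 2 * (4 * u1 ^+ 2 + 2 * u1 + a) - u1 ^+ 2 * (4 * u2 ^+ 2 + 2 * u2 + a) =
  (u2 - u1) * (u1 * (u2 + a) + u2 * (u1 + a)) by ring.
apply: mulr_gt0; first by lra.
have : 0 <= u1 * (u2 + a) by nra.
have : 0 < u2 * (u1 + a) by nra.
lra.
Qed.

Lemma zf_u0 (R : realType) (a : R) : -1 <= a -> a <= 1 / 3 -> zf a (u0 a) = Ia_end a.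
Proof.
move=> h1 h2; case: (sq_facts h1 h2) => s0 s2 ea.
have h0 : 0 <= 1 - 3 * a by lra.
have e3 : Num.sqrt ((1 - 3 * a) ^+ 3) = sq a ^+ 3.
  rewrite -(sqr_sqrtr h0) -/(sq a) -exprM mulnC exprM sqrtr_sqr ger0_norm //.
  exact: exprn_ge0.
rewrite /Ia_end e3 /zf /r2 /u0; move: (sq a) s0 s2 ea => t s0 s2 ea.
by rewrite ea; field.
Qed.

Lemma r2_pos' (R : realType) (a u : R) : -1 <= a -> a <= 1 / 3 ->
  u <= u0 a -> 0 < r2 a u.
Proof.
move=> h1 h2; rewrite le_eqVlt => /orP[/eqP ->|]; last exact: r2_pos.
have hu := u0_neg h1 h2.
case: (sq_facts h1 h2) => s0 s2 ea.
have -> : r2 a (u0 a) = u0 a ^+ 2.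
  by rewrite /r2 /u0; move: (sq a) s0 s2 ea => t s0 s2 ea; rewrite ea; field.
by rewrite expr2; nra.
Qed.

Lemma r2_u0 (R : realType) (a : R) : -1 <= a -> a <= 1 / 3 -> r2 a (u0 a) = u0 a ^+ 2.
Proof.
move=> h1 h2; case: (sq_facts h1 h2) => s0 s2 ea.
by rewrite /r2 /u0; move: (sq a) s0 s2 ea => t s0 s2 ea; rewrite ea; field.
Qed.

Lemma u_of_c (R : realType) (a c : R) : -1 <= a -> a <= 1 / 3 ->
  -1 < c -> c < - (1 / 2) ->
  exists u, u < u0 a /\ u ^+ 2 = c ^+ 2 * r2 a u.
Proof.
move=> h1 h2 hc1 hc2.
have hu := u0_neg h1 h2.
pose p : {poly R} := 'X^2 - (c ^+ 2)%:P * (4%:P * 'X^2 + 2%:P * 'X + a%:P).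
have pE x : p.[x] = x ^+ 2 - c ^+ 2 * r2 a x.
  by rewrite /p /r2 !(hornerD, hornerN, hornerM, hornerC, hornerX, hornerXn).
set al := 4 * c ^+ 2 - 1.
have hal : 0 < al by rewrite /al; nra.
set K := - u0 a + 3 / al + 1.
have hK1 : 1 < K.
  have : 0 < 3 / al by apply: divr_gt0.
  rewrite /K; lra.
have hK2 : 3 <= al * K.
  rewrite /K mulrDr mulrDr mulrCA divff ?mulr1; last by rewrite gt_eqF.
  have : 0 <= al * - u0 a by apply: mulr_ge0; lra.
  lra.
have hpU : p.[- K] < 0.
  rewrite pE /r2.
  have hc2' : c ^+ 2 <= 1 by nra.
  have hac : -1 <= a * c ^+ 2 by nra.
  have : al * K * K >= 3 * K by nra.
  have : c ^+ 2 * K <= K by nra.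
  rewrite /al; nra.
have hp0 : 0 < p.[u0 a].
  rewrite pE r2_u0 //.
  have : c ^+ 2 < 1 by nra.
  have : 0 < u0 a ^+ 2 by rewrite expr2; nra.
  nra.
have hUu : - K <= u0 a.
  have : 0 < 3 / al by apply: divr_gt0.
  rewrite /K; lra.
have hprod : p.[- K] * p.[u0 a] < 0 by rewrite pmulr_llt0.
have [u hu' ru] := poly_ivtoo hUu hprod.
exists u; split; first by move: hu'; rewrite in_itv /= => /andP[].
by move: ru; rewrite /root pE subr_eq0 => /eqP.
Qed.

Lemma sample (R : realType) (a t : R) m j : -1 <= a -> a <= 1 / 3 ->
  pi *+ 2 / 3 < t -> t < pi -> t *+ m.+2 = pi *+ j ->
  exists u, [/\ u < u0 a, u ^+ 2 = cos t ^+ 2 * r2 a u &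
               (-1) ^+ j * (H a m).[zf a u] < 0].
Proof.
move=> h1 h2 ht1 ht2 htj.
have hpi := pi_gt0 R.
have ht0 : 0 < t.
  have : 0 < pi *+ 2 / 3 :> R by rewrite mulr2n; lra.
  lra.
have inI x : 0 <= x -> x <= pi -> x \in `[0, pi] by move=> ? ?; rewrite in_itv /=; apply/andP.
have hc1 : -1 < cos t.
  rewrite -cospi ltr_cos ?inI //; lra.
have hc2 : cos t < - (1 / 2).
  rewrite -cos_2pi3 ltr_cos ?inI //; try lra.
have [u [hu hu2]] := u_of_c h1 h2 hc1 hc2.
exists u; split => //.
have hr := r2_pos h1 h2 hu.
have hun := u0_neg h1 h2.
set rho := Num.sqrt (r2 a u).
have hrho : 0 < rho by rewrite sqrtr_gt0.
have erho : rho ^+ 2 = r2 a u by rewrite sqr_sqrtr // ltW.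
have eu : u = rho * cos t.
  have : (u - cos t * rho) * (u + cos t * rho) = 0.
    rewrite -subr_sqr exprMn erho hu2; ring.
  move/eqP; rewrite mulf_eq0 => /orP[/eqP h|/eqP h]; first by rewrite mulrC; lra.
  have : cos t * rho < 0 by rewrite pmulr_llt0 //; lra.
  lra.
have hst : 0 < sin t by apply: sin_gt0_pi; apply/andP.
have P1z : P u (r2 a u) m.+1 = 0.
  have := P_trig rho t m.+1; rewrite -eu erho htj sin_pin mulr0.
  by move/eqP; rewrite mulf_eq0 (gt_eqF hst) orbF => /eqP.
have P0z : P u (r2 a u) m = - (-1) ^+ j * rho ^+ m.
  have := P_trig rho t m; rewrite -eu erho.
  have -> : t *+ m.+1 = pi *+ j - t by rewrite -htj [t *+ m.+2]mulrSr addrK.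
  rewrite sinB sin_pin cos_pin mul0r sub0r => e.
  by apply: (mulIf (negbT (gt_eqF hst))); rewrite /= e; ring.
have key : (H a m).[zf a u] * ((-1 - 2 * u) ^+ 2 - 2 * u * (-1 - 2 * u) + r2 a u) =
  (-1 - 2 * u) ^+ m.+2 - (-1 - 2 * u) * P u (r2 a u) m.+1 + r2 a u * P u (r2 a u) m
  := key_identity a u m.
rewrite P1z P0z -erho in key.
have hD := D_pos h1 h2 hu.
rewrite -erho in hD.
have hs := s2_lt h1 h2 hu; rewrite -erho in hs.
have habs : `|-1 - 2 * u| < rho.
  have : `|-1 - 2 * u| ^+ 2 = (-1 - 2 * u) ^+ 2 by rewrite real_normK // num_real.
  have := normr_ge0 (-1 - 2 * u).
  nra.
have hlt : `|-1 - 2 * u| ^+ m.+2 < rho ^+ m.+2 by rewrite ltrXn2r.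
have hle : (-1) ^+ j * (-1 - 2 * u) ^+ m.+2 <= `|-1 - 2 * u| ^+ m.+2.
  by rewrite (le_trans (ler_norm _)) // normrM normrX normrN normr1 expr1n mul1r normrX.
have : (-1) ^+ j * (H a m).[zf a u] * ((-1 - 2 * u) ^+ 2 - 2 * u * (-1 - 2 * u) + rho ^+ 2) < 0.
  rewrite -mulrA key.
  have -> : (-1) ^+ j * ((-1 - 2 * u) ^+ m.+2 - (-1 - 2 * u) * 0 + rho ^+ 2 * (- (-1) ^+ j * rho ^+ m))
    = (-1) ^+ j * (-1 - 2 * u) ^+ m.+2 - ((-1) ^+ j * (-1) ^+ j) * rho ^+ m.+2.
    rewrite !exprS; ring.
  have e1 : (-1) ^+ j * (-1) ^+ j = 1 :> R by rewrite -exprMn mulrNN mulr1 expr1n.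
  rewrite e1 mul1r; lra.
by rewrite pmulr_llt0.
Qed.

Lemma x_mono (R : realType) d (x : nat -> R) :
  (forall i, (i < d)%N -> x i < x i.+1) ->
  forall i k, (i <= k)%N -> (k <= d)%N -> x i <= x k.
Proof.
move=> hx i k hik; elim: k hik => [|k IH]; first by rewrite leqn0 => /eqP ->.
rewrite leq_eqVlt => /orP[/eqP -> //|hik hk].
by apply: le_trans (IH hik (ltnW hk)) _; apply/ltW/hx.
Qed.

Lemma count_roots (R : realType) (p : {poly R}) d (x : nat -> R) :
  size p = d.+1 -> (forall i, (i < d)%N -> x i < x i.+1) ->
  (forall i, (i < d)%N -> p.[x i] * p.[x i.+1] < 0) ->
  forall w : R[i], root (map_poly (real_complex R) p) w ->
  exists2 r : R, w = (r%:C)%C & r <= x d.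
Proof.
move=> sp hx hs w hw.
have ex i : exists r, (i < d)%N ==> (root p r && (x i < r < x i.+1)).
  case: (ltnP i d) => hi; last by exists 0.
  have [r hr rr] := poly_ivtoo (ltW (hx i hi)) (hs i hi).
  exists r; rewrite rr /=; move: hr; rewrite in_itv /= => ->.
  by [].
pose rf i := xchoose (ex i).
have rfP i : (i < d)%N -> [/\ root p (rf i), x i < rf i & rf i < x i.+1].
  move=> hi; have := xchooseP (ex i); rewrite -/(rf i) => /implyP/(_ hi).
  by case/and3P.
have rf_lt i k : (i < k)%N -> (k < d)%N -> rf i < rf k.
  move=> hik hk; have [_ _ h1] := rfP i (ltn_trans hik hk).
  have [_ h2 _] := rfP k hk.
  by apply: lt_le_trans h1 (le_trans (x_mono hx hik (ltnW hk)) (ltW h2)).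
pose rs := mkseq rf d.
have hroots : all (root p) rs.
  apply/allP => r; rewrite /rs /mkseq => hr; case/mapP: hr => i; rewrite mem_iota add0n => /andP[_ hi] ->.
  by case: (rfP i hi).
have huniq : poly.uniq_roots rs.
  rewrite uniq_rootsE /rs /mkseq map_inj_in_uniq ?iota_uniq // => i0 k0.
  rewrite !mem_iota !add0n /= => hi hk e; move: i0 k0 hi hk e => i k hi hk e.
  case: (ltngtP i k) => // hik.
  - by have := rf_lt i k hik hk; rewrite e ltxx.
  - by have := rf_lt k i hik hi; rewrite e ltxx.
have ep := all_roots_prod_XsubC (etrans sp (congr1 S (esym (size_mkseq rf d)))) hroots huniq.
have lc0 : lead_coef p != 0 by rewrite lead_coef_eq0 -size_poly_gt0 sp.
move: hw; rewrite ep map_polyZ rootZ; last by rewrite fmorph_eq0.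
rewrite rmorph_prod /=.
have -> : \prod_(z <- rs) map_poly (real_complex R) ('X - z%:P) =
   \prod_(z <- map (real_complex R) rs) ('X - z%:P).
  by rewrite big_map; apply: eq_bigr => z _; rewrite map_polyXsubC.
rewrite root_prod_XsubC => /mapP[r hr ->].
exists r => //.
move: hr; rewrite /rs /mkseq => /mapP[j]; rewrite mem_iota add0n => /andP[_ hj] ->.
have [_ _ h] := rfP j hj.
by apply: ltW (lt_le_trans h (x_mono hx hj (leqnn d))).
Qed.

Lemma far_left (R : realType) (p : {poly R}) B : p != 0 ->
  exists2 y, y < B & Num.sg p.[y] = sgp_minfty p.
Proof.
move=> p0; set cb := cauchy_bound p.
have hcb := cauchy_bound_gt0 p.
exists (Num.min (B - 1) (- cb)).
  by rewrite gt_min; apply/orP; left; lra.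
apply: (@sgp_minftyP _ (- cb)); last by rewrite in_itv /= ge_min lexx orbT.
move=> z; rewrite in_itv /= => hz; apply/negP => /rootP hr.
have := cauchy_boundP p0 hr; rewrite -/cb.
have : cb <= `|z| by rewrite ler_normr; apply/orP; right; lra.
lra.
Qed.

Lemma tt_lo (R : realType) n N : (0 < N)%N -> (2 * N < 3 * n)%N ->
  pi *+ 2 / 3 < pi *+ n / N%:R :> R.
Proof.
move=> hN hn; have hpi := pi_gt0 R.
have hn' : (2 * N)%:R < (3 * n)%:R :> R by rewrite ltr_nat.
rewrite !natrM in hn'.
have hN' : 0 < N%:R :> R by rewrite ltr0n.
rewrite -[pi *+ 2]mulr_natr -[pi *+ n]mulr_natr -!mulrA ltr_pM2l // ltr_pdivlMr //.
lra.
Qed.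

Lemma tt_hi (R : realType) n N : (n < N)%N -> pi *+ n / N%:R < pi :> R.
Proof.
move=> hn; have hpi := pi_gt0 R.
have hN' : 0 < N%:R :> R by rewrite ltr0n; lia.
by rewrite ltr_pdivrMr // -[pi *+ n]mulr_natr ltr_pM2l // ltr_nat.
Qed.

Lemma tt_eq (R : realType) n N : (0 < N)%N -> (pi *+ n / N%:R) *+ N = pi *+ n :> R.
Proof.
move=> hN; rewrite -[_ *+ N]mulr_natr divfK //; by rewrite pnatr_eq0 -lt0n.
Qed.

Lemma cos2_mono (R : realType) (t1 t2 : R) : pi *+ 2 / 3 < t1 -> t1 < t2 -> t2 < pi ->
  cos t1 ^+ 2 < cos t2 ^+ 2.
Proof.
move=> h1 h12 h2; have hpi := pi_gt0 R.
have h0 : 0 < pi *+ 2 / 3 :> R by rewrite mulr2n; lra.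
have inI x : 0 <= x -> x <= pi -> x \in `[0, pi] by move=> ? ?; rewrite in_itv /=; apply/andP.
have hc : cos t2 < cos t1 by rewrite ltr_cos ?inI //; lra.
have hc1 : cos t1 < - (1 / 2).
  rewrite -cos_2pi3 ltr_cos ?inI //; lra.
rewrite !expr2.
have : 0 < (cos t1 - cos t2) * (- cos t1 - cos t2) by apply: mulr_gt0; lra.
lra.
Qed.

Lemma order_u (R : realType) (a u1 u2 C1 C2 : R) : -1 <= a -> a <= 1 / 3 ->
  u1 < u0 a -> u2 < u0 a -> u1 ^+ 2 = C1 * r2 a u1 -> u2 ^+ 2 = C2 * r2 a u2 ->
  C1 < C2 -> u1 < u2.
Proof.
move=> h1 h2 hu1 hu2 e1 e2 hC.
have p1 := r2_pos h1 h2 hu1; have p2 := r2_pos h1 h2 hu2.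
case: (ltgtP u1 u2) => // h.
- have := g_mono h1 h2 h (ltW hu1); rewrite e1 e2 => hh.
  have hp : 0 < r2 a u1 * r2 a u2 by apply: mulr_gt0.
  have : (C2 - C1) * (r2 a u1 * r2 a u2) < 0.
    have -> : (C2 - C1) * (r2 a u1 * r2 a u2) = C2 * r2 a u2 * r2 a u1 - C1 * r2 a u1 * r2 a u2 by ring.
    lra.
  rewrite pmulr_llt0 //; lra.
- move: e2; rewrite -h e1 => e.
  have : C1 = C2 by apply: (mulIf (negbT (gt_eqF p1))).
  lra.
Qed.


Lemma part1_gen (R : realType) (a : R) m d r : -1 <= a -> a <= 1 / 3 ->
  m = (3 * d + r)%N -> (r <= 2)%N -> size (H a m) = d.+1 ->
  ((r < 2)%N -> forall B, exists2 y, y < B & (-1) ^+ (2 * d + r + 1) * (H a m).[y] < 0) ->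
  forall w : R[i], root (map_poly (real_complex R) (H a m)) w ->
  exists2 x : R, w = (x%:C)%C & x <= Ia_end a.
Proof.
move=> h1 h2 hm hr sH hfar w hw.
pose J i := (2 * d + r + 1 + i)%N.
pose tt i : R := pi *+ J i / (m.+2)%:R.
pose valid i := (2 * m.+2 < 3 * J i)%N && (J i < m.+2)%N.
have ex i : exists u, valid i ==> [&& u < u0 a, u ^+ 2 == cos (tt i) ^+ 2 * r2 a u &
     (-1) ^+ J i * (H a m).[zf a u] < 0].
  case hv : (valid i); last by exists 0.
  move/andP: hv => [hv1 hv2].
  have [u [hu1 hu2 hu3]] := sample h1 h2 (tt_lo R (ltn0Sn _) hv1) (tt_hi R hv2) (tt_eq R (J i) (ltn0Sn m.+1)).
  by exists u; rewrite hu1 hu2 hu3 eqxx.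
pose uf i := xchoose (ex i).
have ufP i : valid i -> [/\ uf i < u0 a, uf i ^+ 2 = cos (tt i) ^+ 2 * r2 a (uf i) &
     (-1) ^+ J i * (H a m).[zf a (uf i)] < 0].
  move=> hv; have := xchooseP (ex i); rewrite -/(uf i) hv /= => /and3P[-> /eqP -> ->].
  by [].
have val1 i : (1 <= i <= d)%N -> valid i by rewrite /valid /J; lia.
have val0 : ~~ valid 0 -> (r < 2)%N by rewrite /valid /J; lia.
have [y0 hy0] : exists y0, (((r < 2) && (0 < d))%N ==> ((y0 < zf a (uf 1%N)) &&
      ((-1) ^+ J 0 * (H a m).[y0] < 0))) && (~~ ((r < 2) && (0 < d))%N ==> (y0 == Ia_end a)).
  case hc : ((r < 2) && (0 < d))%N => /=.
    move/andP: hc => [hc1 hc2].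
    have [y hy1 hy2] := hfar hc1 (zf a (uf 1%N)).
    by exists y; rewrite hy1 /J addn0 hy2.
  by exists (Ia_end a).
pose x i := if valid i then zf a (uf i) else y0.
have hpi := pi_gt0 R.
have sgn i : (i <= d)%N -> (0 < d)%N -> (-1) ^+ J i * (H a m).[x i] < 0.
  move=> hi hd; rewrite /x; case hv : (valid i); first by case: (ufP i hv).
  have i0 : i = 0%N.
    case: i hi hv => // i hi hv.
    have : valid i.+1 by apply: val1; lia.
    by rewrite hv.
  subst i; have hr2 := val0 (negbT hv).
  by move: hy0; rewrite hr2 hd /= => /andP[/andP[_ ->]].
have tt_lt i : tt i < tt i.+1.
  rewrite /tt; have -> : J i.+1 = (J i).+1 by rewrite /J addnS.
  rewrite ltr_pM2r ?invr_gt0; last by have := ler0n R m.+1; lra.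
  rewrite [pi *+ (J i).+1]mulrSr; lra.
have vlo i : valid i -> pi *+ 2 / 3 < tt i.
  by move=> /andP[hv1 hv2]; apply: tt_lo.
have vhi i : valid i -> tt i < pi.
  by move=> /andP[hv1 hv2]; apply: tt_hi.
have hxlt i : (i < d)%N -> x i < x i.+1.
  move=> hi; have hv1 : valid i.+1 by apply: val1; lia.
  rewrite /x hv1; case hv : (valid i).
    have [a1 a2 _] := ufP i hv; have [b1 b2 _] := ufP i.+1 hv1.
    apply: (zf_mono h1 h2 _ (ltW b1)).
    apply: (order_u h1 h2 a1 b1 a2 b2).
    by apply: cos2_mono (vlo i hv) (tt_lt i) (vhi _ hv1).
  have i0 : i = 0%N.
    case: i hi hv hv1 => // i hi hv _.
    have : valid i.+1 by apply: val1; lia.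
    by rewrite hv.
  subst i; have hr2 := val0 (negbT hv).
  by move: hy0; rewrite hr2 hi /= => /andP[/andP[-> _]].
have hprod i : (i < d)%N -> (H a m).[x i] * (H a m).[x i.+1] < 0.
  move=> hi; have s1 := sgn i (ltnW hi) (leq_ltn_trans (leq0n i) hi).
  have s2 := sgn i.+1 hi (leq_ltn_trans (leq0n i) hi).
  rewrite /J addnS exprS in s2.
  have ee : (-1) ^+ J i * (-1) ^+ J i = 1 :> R by rewrite -exprMn mulrNN mulr1 expr1n.
  move: s1 s2 ee; set e := (-1) ^+ J i; set A := (H a m).[x i]; set B := (H a m).[x i.+1].
  move=> s1 s2 ee.
  have hAB : 0 < (e * A) * (-1 * e * B) by nra.
  have : (e * A) * (-1 * e * B) = - (e * e) * (A * B) by ring.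
  rewrite ee; lra.
have hxd : x d <= Ia_end a.
  rewrite /x; case hv : (valid d).
    have [b1 _ _] := ufP d hv.
    by rewrite -zf_u0 //; apply/ltW/zf_mono.
  have d0 : d = 0%N.
    case: (posnP d) => // hd.
    have : valid d by apply: val1; lia.
    by rewrite hv.
  by move: hy0; rewrite d0 andbF /= => /eqP ->.
have [xr e hxr] := count_roots sH hxlt hprod hw.
by exists xr => //; apply: le_trans hxd.
Qed.

Lemma size_lead (R : nzRingType) (p : {poly R}) n :
  (size p <= n.+1)%N -> p`_n != 0 -> size p = n.+1 /\ lead_coef p = p`_n.
Proof.
move=> hs hc.
have e : size p = n.+1.
  apply/eqP; rewrite eqn_leq hs /=; rewrite ltnNge; apply/negP => /leq_sizeP/(_ n (leqnn n)).
  by move/eqP; rewrite (negbTE hc).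
by split => //; rewrite lead_coefE e.
Qed.

Lemma part1 (R : realType) (a : R) m : -1 <= a -> a <= 1 / 3 ->
  forall w : R[i], root (map_poly (real_complex R) (H a m)) w ->
  exists2 x : R, w = (x%:C)%C & x <= Ia_end a.
Proof.
move=> h1 h2.
set d := (m %/ 3)%N; set r := (m %% 3)%N.
have hm : m = (3 * d + r)%N by rewrite /d /r {1}(divn_eq m 3); lia.
have hr : (r <= 2)%N by rewrite /r; lia.
have [[s0 c0] [[s1 c1] [s2 c2]]] := Hdeg a d.
have n1 : (-1) ^+ d != 0 :> R by rewrite signr_eq0.
have hr3 : r = 0%N \/ r = 1%N \/ r = 2%N by lia.
have ee : (-1) ^+ d * (-1) ^+ d = 1 :> R by rewrite -exprMn mulrNN mulr1 expr1n.
have e2d : (-1) ^+ (2 * d) = 1 :> R by rewrite exprM expr2 mulrNN mulr1 expr1n.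
move=> w; rewrite hm.
case: hr3 => [r0|[r1|r2]]; rewrite ?r0 ?r1 ?r2 => hw.
- have hc : (H a (3 * d))`_d != 0 by rewrite c0 signr_eq0.
  have [sz lc] := size_lead s0 hc.
  rewrite addn0 in hw.
  apply: (@part1_gen R a (3 * d) d 0 h1 h2) => //; first by rewrite addn0.
  move=> _ B.
  have hne : H a (3 * d) != 0 by rewrite -size_poly_gt0 sz.
  have [y hy hs] := far_left B hne; exists y => //.
  have : Num.sg (H a (3 * d)).[y] == 1.
    by rewrite hs /sgp_minfty sz lc c0 /= ee sgr1.
  rewrite sgr_cp0 => hp.
  rewrite addn0 addn1 exprS e2d mulr1 mulN1r; lra.
- have hc : (H a (3 * d).+1)`_d != 0.
    by rewrite c1 mulf_neq0 ?signr_eq0 // pnatr_eq0.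
  have [sz lc] := size_lead s1 hc.
  rewrite addn1 in hw.
  apply: (@part1_gen R a (3 * d).+1 d 1 h1 h2) => //; first by rewrite addn1.
  move=> _ B.
  have hne : H a (3 * d).+1 != 0 by rewrite -size_poly_gt0 sz.
  have [y hy hs] := far_left B hne; exists y => //.
  have hd : 0 < d.+1%:R :> R by rewrite ltr0n.
  have : Num.sg (H a (3 * d).+1).[y] == -1.
    rewrite hs /sgp_minfty sz lc c1 /= exprS mulrA mulrCA ee mulr1 mulN1r.
    by rewrite ltr0_sg // oppr_lt0.
  rewrite sgr_cp0 => hp.
  rewrite addn1 addn1 !exprS e2d; lra.
- have hc : (H a (3 * d).+2)`_d != 0.
    rewrite c2 mulf_neq0 ?signr_eq0 // mulf_neq0 ?pnatr_eq0 //.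
    have : 1 <= d.+2%:R / 2 :> R.
      rewrite ler_pdivlMr // mul1r ler_nat; lia.
    move=> hh; apply/eqP => h0; lra.
  have [sz lc] := size_lead s2 hc.
  rewrite addn2 in hw.
  apply: (@part1_gen R a (3 * d).+2 d 2 h1 h2) => //; first by rewrite addn2.
Qed.


Lemma zf_inv (R : realType) (a y : R) : -1 <= a -> a <= 1 / 3 -> y <= Ia_end a ->
  exists2 w, w <= u0 a & zf a w = y.
Proof.
move=> h1 h2 hy.
pose q : {poly R} := (1 + 2%:P * 'X) * (4%:P * 'X^2 + 2%:P * 'X + a%:P) - y%:P.
have qE u : q.[u] = zf a u - y.
  rewrite /q /zf /r2 !(hornerD, hornerN, hornerM, hornerC, hornerX, hornerXn).
  by rewrite expr2.
set K := `|y| + 3.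
have hK : 3 <= K by rewrite /K; have := normr_ge0 y; lra.
have hKy : - K < y by rewrite /K; have := ler_norm (- y); rewrite normrN; lra.
have hu := u0_neg h1 h2.
set U := Num.min (- K) (u0 a).
have hUK : U <= - K by rewrite /U ge_min lexx.
have hUu : U <= u0 a by rewrite /U ge_min lexx orbT.
have hqU : q.[U] <= 0.
  rewrite qE /zf /r2.
  have hU3 : U <= -3 by lra.
  have : 0 <= 2 + 2 * a by lra.
  have : (1 + 2 * U) * (4 * U ^+ 2 + 2 * U + a) <= U by nra.
  lra.
have hqu : 0 <= q.[u0 a] by rewrite qE zf_u0 //; lra.
have hq2 : q.[U] <= 0 <= q.[u0 a] by rewrite hqU hqu.
have [w hw rw] := poly_ivt hUu hq2.
exists w; first by case/andP: hw.
by move: rw; rewrite /root qE subr_eq0 => /eqP.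
Qed.

Lemma order_u' (R : realType) (a u1 u2 C1 C2 : R) : -1 <= a -> a <= 1 / 3 ->
  u1 <= u0 a -> u2 <= u0 a -> u1 ^+ 2 = C1 * r2 a u1 -> u2 ^+ 2 = C2 * r2 a u2 ->
  C1 < C2 -> u1 < u2.
Proof.
move=> h1 h2 hu1 hu2 e1 e2 hC.
have p1 := r2_pos' h1 h2 hu1; have p2 := r2_pos' h1 h2 hu2.
case: (ltgtP u1 u2) => // h.
- have := g_mono h1 h2 h hu1; rewrite e1 e2 => hh.
  have hp : 0 < r2 a u1 * r2 a u2 by apply: mulr_gt0.
  have : (C2 - C1) * (r2 a u1 * r2 a u2) < 0.
    have -> : (C2 - C1) * (r2 a u1 * r2 a u2) = C2 * r2 a u2 * r2 a u1 - C1 * r2 a u1 * r2 a u2 by ring.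
    lra.
  rewrite pmulr_llt0 //; lra.
- move: e2; rewrite -h e1 => e.
  have : C1 = C2 by apply: (mulIf (negbT (gt_eqF p1))).
  lra.
Qed.

Lemma cos2_mono' (R : realType) (t1 t2 : R) : pi *+ 2 / 3 < t1 -> t1 < t2 -> t2 <= pi ->
  cos t1 ^+ 2 < cos t2 ^+ 2.
Proof.
move=> h1 h12 h2; have hpi := pi_gt0 R.
have h0 : 0 < pi *+ 2 / 3 :> R by rewrite mulr2n; lra.
have inI x : 0 <= x -> x <= pi -> x \in `[0, pi] by move=> ? ?; rewrite in_itv /=; apply/andP.
have hc : cos t2 < cos t1 by rewrite ltr_cos ?inI //; lra.
have hc1 : cos t1 < - (1 / 2).
  rewrite -cos_2pi3 ltr_cos ?inI //; lra.
rewrite !expr2.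
have : 0 < (cos t1 - cos t2) * (- cos t1 - cos t2) by apply: mulr_gt0; lra.
lra.
Qed.

Lemma v2_ge0 (R : realType) (a u : R) : -1 <= a -> a <= 1 / 3 ->
  u <= u0 a -> u ^+ 2 <= r2 a u.
Proof.
move=> h1 h2; rewrite le_eqVlt => /orP[/eqP ->|hu].
  by rewrite r2_u0.
have := v2_pos h1 h2 hu; rewrite /r2; lra.
Qed.

Lemma tau_of (R : realType) (a w : R) : -1 <= a -> a <= 1 / 3 -> w <= u0 a ->
  exists tau, [/\ pi *+ 2 / 3 < tau, tau <= pi & w ^+ 2 = cos tau ^+ 2 * r2 a w].
Proof.
move=> h1 h2 hw.
have hr := r2_pos' h1 h2 hw.
have hu := u0_neg h1 h2.
have ha := u0a h1 h2.
set rho := Num.sqrt (r2 a w).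
have hrho : 0 < rho by rewrite sqrtr_gt0.
have erho : rho ^+ 2 = r2 a w by rewrite sqr_sqrtr // ltW.
set g := w / rho.
have ew : w = g * rho by rewrite /g divfK // gt_eqF.
have hv := v2_ge0 h1 h2 hw.
have hg1 : -1 <= g.
  rewrite /g ler_pdivlMr //; rewrite -erho in hv; nra.
have hg2 : g < - (1 / 2).
  rewrite /g ltr_pdivrMr //.
  have : rho ^+ 2 < 4 * w ^+ 2 by rewrite erho /r2; lra.
  nra.
have hpi := pi_gt0 R.
have hgI : g \in `[(-1), 1] by rewrite in_itv /=; apply/andP; split; lra.
exists (acos g); split.
- have h0 : 0 <= pi *+ 2 / 3 :> R by rewrite mulr2n; lra.
  have h3 : pi *+ 2 / 3 <= pi :> R by rewrite mulr2n; lra.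
  rewrite -(ltr_cos (y := acos g)) ?acosK // ?cos_2pi3 //.
    by rewrite in_itv /=; apply/andP.
  rewrite in_itv /=; apply/andP; split; [apply: acos_ge0 | apply: acos_lepi]; lra.
- by apply: acos_lepi; lra.
- by rewrite acosK // -erho ew; ring.
Qed.

Lemma part2 (R : realType) (a x eps : R) : -1 <= a -> a <= 1 / 3 ->
  x <= Ia_end a -> 0 < eps ->
  exists (m : nat) (r : R), [/\ H a m != 0, root (H a m) r & `|r - x| < eps].
Proof.
move=> h1 h2 hx he.
have hpi := pi_gt0 R.
have hxe : x - eps <= Ia_end a by lra.
have [w1 hw1 zw1] := zf_inv h1 h2 hxe.
have [w2 hw2 zw2] := zf_inv h1 h2 hx.
have w12 : w1 < w2.
  case: (ltP w1 w2) => // h; exfalso.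
  move: h; rewrite le_eqVlt => /orP[/eqP e|h].
    by move: zw1; rewrite -e zw2; lra.
  by have := zf_mono h1 h2 h hw1; rewrite zw1 zw2; lra.
have [tau1 [ht1 ht1' et1]] := tau_of h1 h2 hw1.
have [tau2 [ht2 ht2' et2]] := tau_of h1 h2 hw2.
have t12 : tau1 < tau2.
  case: (ltP tau1 tau2) => // h; exfalso.
  have hle : cos tau2 ^+ 2 <= cos tau1 ^+ 2.
    move: h; rewrite le_eqVlt => /orP[/eqP -> //|h].
    by apply/ltW/cos2_mono'.
  have := g_mono h1 h2 w12 hw2.
  rewrite et1 et2.
  have p1 := r2_pos' h1 h2 hw1; have p2 := r2_pos' h1 h2 hw2.
  have hp : 0 < r2 a w1 * r2 a w2 by apply: mulr_gt0.
  have : (cos tau2 ^+ 2 - cos tau1 ^+ 2) * (r2 a w1 * r2 a w2) <= 0.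
    by rewrite pmulr_lle0 //; lra.
  have -> : (cos tau2 ^+ 2 - cos tau1 ^+ 2) * (r2 a w1 * r2 a w2) =
    cos tau2 ^+ 2 * r2 a w2 * r2 a w1 - cos tau1 ^+ 2 * r2 a w1 * r2 a w2 by ring.
  lra.
set del := tau2 - tau1.
have hdel : 0 < del by rewrite /del; lra.
set m := Num.truncn (pi *+ 2 / del).
have hz1 : 0 <= pi *+ 2 / del by apply: divr_ge0; [rewrite mulr2n; lra | lra].
have [_ hm1] := andP (truncn_itv hz1).
set Nr : R := (m.+2)%:R.
have hNr : 0 < Nr by rewrite ltr0n.
have hNd : pi *+ 2 < Nr * del.
  rewrite -ltr_pdivrMr // /Nr -/m.
  move: hm1; rewrite -/m => hm1.
  have : m.+1%:R < m.+2%:R :> R by rewrite ltr_nat.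
  lra.
set z2 := tau1 * Nr / pi.
have hz2 : 0 <= z2.
  rewrite /z2; apply: divr_ge0; last lra.
  apply: mulr_ge0; last lra.
  have : 0 <= pi *+ 2 / 3 :> R by rewrite mulr2n; lra.
  lra.
set j := (Num.truncn z2).+1.
have [hj1 hj2] := andP (truncn_itv hz2).
have ej : j%:R = (Num.truncn z2)%:R + 1 :> R by rewrite /j natr1.
set tj := pi *+ j / Nr.
set tj1 := pi *+ j.+1 / Nr.
have etj : tj = pi * j%:R / Nr.
  by rewrite /tj mulr_natr.
have etj1 : tj1 = pi * j%:R / Nr + pi / Nr.
  by rewrite /tj1 -addn1 mulrnDr mulr1n mulrDl mulr_natr.
have ez : tau1 * Nr = z2 * pi by rewrite /z2 divfK // gt_eqF.
have htj : tau1 < tj.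
  rewrite etj ltr_pdivlMr // ez mulrC ltr_pM2l // ej; lra.
have htj1 : tj1 < tau2.
  have -> : tj1 = pi * (j%:R + 1) / Nr by rewrite etj1 mulrDr mulr1 mulrDl.
  rewrite ltr_pdivrMr //.
  have h3 : pi * (j%:R + 1) <= pi * (z2 + 2) by rewrite ler_pM2l // ej; lra.
  have e3 : pi * (z2 + 2) = tau1 * Nr + pi *+ 2 by rewrite ez mulr2n; ring.
  have e4 : tau2 * Nr = tau1 * Nr + Nr * del by rewrite /del; ring.
  lra.
have tjj : tj < tj1.
  have : 0 < pi / Nr by apply: divr_gt0.
  by rewrite etj1 etj ltrDl.
have [ua [hua1 hua2 hua3]] := sample h1 h2 (lt_trans ht1 htj) (lt_trans tjj (lt_le_trans htj1 ht2'))
   (tt_eq R j (ltn0Sn m.+1)).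
have [ub [hub1 hub2 hub3]] := sample h1 h2 (lt_trans ht1 (lt_trans htj tjj)) (lt_le_trans htj1 ht2')
   (tt_eq R j.+1 (ltn0Sn m.+1)).
have o1 : w1 < ua.
  apply: (order_u' h1 h2 hw1 (ltW hua1) et1 hua2).
  by apply: cos2_mono' ht1 htj (ltW (lt_trans tjj (lt_le_trans htj1 ht2'))).
have o2 : ua < ub.
  apply: (order_u h1 h2 hua1 hub1 hua2 hub2).
  by apply: cos2_mono' (lt_trans ht1 htj) tjj (ltW (lt_le_trans htj1 ht2')).
have o3 : ub < w2.
  apply: (order_u' h1 h2 (ltW hub1) hw2 hub2 et2).
  by apply: cos2_mono' (lt_trans ht1 (lt_trans htj tjj)) htj1 ht2'.
have z1 := zf_mono h1 h2 o1 (ltW hua1).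
have z2' := zf_mono h1 h2 o2 (ltW hub1).
have z3 := zf_mono h1 h2 o3 hw2.
rewrite zw1 in z1; rewrite zw2 in z3.
have hprod : (H a m).[zf a ua] * (H a m).[zf a ub] < 0.
  rewrite exprS in hub3.
  have ee : (-1) ^+ j * (-1) ^+ j = 1 :> R by rewrite -exprMn mulrNN mulr1 expr1n.
  move: hua3 hub3 ee; set e := (-1) ^+ j; set A := (H a m).[zf a ua]; set B := (H a m).[zf a ub].
  move=> s1 s2 ee.
  have hAB : 0 < (e * A) * (-1 * e * B) by nra.
  have : (e * A) * (-1 * e * B) = - (e * e) * (A * B) by ring.
  rewrite ee; lra.
have [r hr rr] := poly_ivtoo (ltW z2') hprod.
exists m, r; split => //.
- apply/eqP => h0; move: hprod; rewrite h0 !horner0 mul0r; lra.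
- move: hr; rewrite in_itv /= => /andP[hr1 hr2].
  rewrite ltr_norml; apply/andP; split; lra.
Qed.

Unset Implicit Arguments.

Theorem theorem2p1 (R : realType) (a : R) :
  -1 <= a -> a <= 1 / 3 ->
  (* every (complex) zero of every nonzero H_m is real and lies in I_a *)
  (forall (m : nat) (w : R[i]),
      H a m != 0 -> root (map_poly (real_complex R) (H a m)) w ->
      exists2 x : R, w = (x%:C)%C & x <= Ia_end a) /\
  (* the union of the zero sets is dense in I_a *)
  (forall (x eps : R), x <= Ia_end a -> 0 < eps ->
      exists (m : nat) (r : R),
        [/\ H a m != 0, root (H a m) r & `|r - x| < eps]).
Proof.
move=> h1 h2; split.
- by move=> m w _ hw; apply: (part1 h1 h2 hw).
- by move=> x eps hx he; apply: (part2 h1 h2 hx he).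
Qed.
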